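(* Let $T$ be a reduced linear trellis of length $n$. Any two elementary trellis factorizations of $T$ have the same span distribution. More precisely, for every span $\mathfrak{s}$, the number of factors with span $\mathfrak{s}$ in any elementary trellis factorization of $T$ equals $$\dim\mathbb{S}_{\mathfrak{s}}(T)-\dim\mathbb{S}_{<\mathfrak{s}}(T)=\dim\bigl(\mathbb{S}_{\mathfrak{s}}(T)/\mathbb{S}_{<\mathfrak{s}}(T)\bigr).$$
   Context: Let $\mathbb{F}$ be a finite field and $n\ge1$; indices are taken in $\mathbb{Z}_n$. A trellis $T$ of length $n$ over $\mathbb{F}$ consists of pairwise disjoint finite vertex sets $V_i(T)$, $i\in\mathbb{Z}_n$, and edge sets $E_i(T)\subseteq V_i(T)\times\mathbb{F}\times V_{i+1}(T)$; $(v,\alpha,w)\in E_i(T)$ is an edge from $v$ to $w$ with label $\alpha$. Trellises are trim. $T$ is linear if each $V_i(T)$ is an $\mathbb{F}$-vector space and each $E_i(T)$ a subspace. A cycle is a closed path of length $n$ starting in $V_0(T)$, identified with $(\mathbf{v},\boldsymbol{\alpha})\in\prod_iV_i(T)\times\mathbb{F}^n$; $\mathbb{S}(T)$ is the space of cycles. $T$ is reduced if every edge lies on a cycle. $T\sim T'$ means there are bijections $f_i:V_i(T)\to V_i(T')$ with $(v,\alpha,w)\in E_i(T)\iff(f_i(v),\alpha,f_{i+1}(w))\in E_i(T')$. Spans: for $a\in\mathbb{Z}_n$, $0\le l\le n-1$, $[a,a+l]=\{a,\dots,a+l\}\subseteq\mathbb{Z}_n$, $(a,a+l]=[a,a+l]\setminus\{a\}$;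 $(a,l)$ is a span; degenerate spans are $\emptyset$ (length $-1$) and $\mathbb{Z}_n$ (length $n$, written $(a,n)$). Partial order: $(a_1,l_1)\le(a_2,l_2)$ iff ($l_1\le l_2<n-1$ and $[a_1,a_1+l_1]\subseteq[a_2,a_2+l_2]$) or ($l_2=n-1$ and $(a_1,a_1+l_1]\subseteq(a_2,a_2+l_2]$) or $l_1=-1$ or $l_2=n$. A vector in $\mathbb{F}^n$ has span $(a,l)$, $0\le l\le n-1$, if its support lies in $[a,a+l]$; $\mathbb{Z}_n$ is a span of every vector. A nondegenerate $(a,l)$ is a span of a cycle $(\mathbf{v},\boldsymbol{\alpha})$ if $\{i:v_i\ne0\}\subseteq(a,a+l]$ and $\{i:\alpha_i\ne0\}\subseteq[a,a+l]$; $\emptyset$ is a span only of the zero cycle and $\mathbb{Z}_n$ of every cycle. $\mathbb{S}_{\mathfrak{s}}(T)$ is the subspace of cycles with span $\mathfrak{s}$; $\mathbb{S}_{<\mathfrak{s}}(T):=\sum_{\mathfrak{s}'\lneq\mathfrak{s}}\mathbb{S}_{\mathfrak{s}'}(T)$. Elementary trellises and products: for $\boldsymbol{\alpha}\in\mathbb{F}^n$ with span $(a,l)$, $0\le l\le n$, the elementary trellis $\boldsymbol{\alpha}|(a,l)$ has $V_i=\mathbb{F}$ for $i\in(a,a+l]$ (all $i$ if $l=n$), $V_i=0$ otherwise, and $E_i=\langle(u_i,\alpha_i,u_{i+1})\rangle$ with $u_i=1$ if $i\in(a,a+l]$, $u_i=0$ otherwise. The product $T\otimes T'$ has $V_i=V_i(T)\times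 V_i(T')$ and $E_i=\{((v,v'),\alpha+\alpha',(w,w')):(v,\alpha,w)\in E_i(T),(v',\alpha',w')\in E_i(T')\}$. An elementary trellis factorization of $T$ is an expression $T\sim\bigotimes_{i=1}^r\boldsymbol{\alpha}^i|(a_i,l_i)$, where by convention at most one factor has span $(a,0)$ for each $a\in\mathbb{Z}_n$; its span distribution is the multiset $\{\{(a_i,l_i):i=1,\dots,r\}\}$. *)

(* Defs.v *)
From Stdlib Require List.
From HB Require Import structures.
From mathcomp Require Import all_boot all_order all_algebra.
Set Implicit Arguments. Unset Strict Implicit. Unset Printing Implicit Defensive.
Import GRing.Theory.
Local Open Scope ring_scope.

(* Indices Z_n are represented by 'I_n (with 0 < n); i+1 is [ordS i]. *)

(* [SSeg a l] is the nondegenerate span (a,l), 0 <= l <= n-1 (l : 'I_n);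
   [SEmpty] is the empty span (length -1) and [SFull] is Z_n (length n,
   i.e. any (a,n)). *)
Variant tspan (n : nat) := SEmpty | SFull | SSeg of 'I_n & 'I_n.
Arguments SEmpty {n}. Arguments SFull {n}.

Definition span_eqb n (s1 s2 : tspan n) : bool :=
  match s1, s2 with
  | SEmpty, SEmpty => true
  | SFull, SFull => true
  | SSeg a l, SSeg a' l' => (a == a') && (l == l')
  | _, _ => false
  end.

(* i \in [a, a+l] and i \in (a, a+l] in Z_n *)
Definition in_cc n (a l i : 'I_n) : bool := ((i + n - a) %% n <= l)%N.
Definition in_oc n (a l i : 'I_n) : bool := (0 < (i + n - a) %% n <= l)%N.

Definition span_le n (s1 s2 : tspan n) : bool :=
  match s1, s2 with
  | SEmpty, _ => true
  | _, SFull => true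
  | SFull, _ => false
  | SSeg _ _, SEmpty => false
  | SSeg a1 l1, SSeg a2 l2 =>
      ((l1 <= l2)%N && (l2 < n.-1)%N &&
         [forall i, in_cc a1 l1 i ==> in_cc a2 l2 i])
      || ((l2 == n.-1 :> nat) && [forall i, in_oc a1 l1 i ==> in_oc a2 l2 i])
  end.

Definition span_lt n (s1 s2 : tspan n) : bool :=
  ~~ span_eqb s1 s2 && span_le s1 s2.

Definition all_spans n : seq (tspan n) :=
  SEmpty :: SFull :: [seq SSeg a l | a <- enum 'I_n, l <- enum 'I_n].

Definition vec_has_span (F : nzRingType) n (s : tspan n) (alpha : 'I_n -> F) : Prop :=
  match s with
  | SEmpty => forall i, alpha i = 0
  | SFull => True
  | SSeg a l => forall i, alpha i != 0 -> in_cc a l i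
  end.

Record trellis (F : Type) (n : nat) := Trellis {
  vtx : 'I_n -> finType;
  edge : forall i : 'I_n, vtx i -> F -> vtx (ordS i) -> Prop }.
Arguments vtx {F n} t i.
Arguments edge {F n} t i _ _ _.

Definition tr_equiv F n (T T' : trellis F n) : Prop :=
  exists f : forall i, vtx T i -> vtx T' i,
    (forall i, bijective (f i)) /\
    (forall i v a w, edge T i v a w <-> edge T' i (f i v) a (f (ordS i) w)).

Definition tprod (F : nzRingType) n (T T' : trellis F n) : trellis F n :=
  @Trellis F n (fun i => (vtx T i * vtx T' i)%type)
    (fun i vv a ww => exists a1 a2, a = a1 + a2 /\
        edge T i vv.1 a1 ww.1 /\ edge T' i vv.2 a2 ww.2).

Definition tunit (F : nzRingType) n : trellis F n :=
  @Trellis F n (fun _ => unit) (fun _ _ a _ => a = 0).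

Definition active n (s : tspan n) (i : 'I_n) : bool :=
  match s with
  | SEmpty => false
  | SFull => true
  | SSeg a l => in_oc a l i
  end.

(* elementary trellis alpha|s : V_i = F if i active, V_i = 0 = {0} otherwise;
   E_i = < (u_i, alpha_i, u_{i+1}) >. *)
Definition elem_trellis (F : finFieldType) n (alpha : 'I_n -> F) (s : tspan n)
  : trellis F n :=
  @Trellis F n (fun i => {x : F | active s i || (x == 0)})
    (fun i v b w =>
       let u j := (if active s j then 1 else 0 : F) in
       exists c : F, val v = c * u i /\ b = c * alpha i /\ val w = c * u (ordS i)).

Record factor (F : Type) (n : nat) := Factor { fvec : 'I_n -> F; fspan : tspan n }.

Definition tprod_list (F : finFieldType) n (fs : seq (factor F n)) : trellis F n :=
  foldr (fun f T => tprod (elem_trellis (fvec f) (fspan f)) T) (tunit F n) fs.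

Definition is_point_span n (a : 'I_n) (s : tspan n) : bool :=
  match s with SSeg a' l => (a' == a) && (val l == 0)%N | _ => false end.

Definition valid_factor (F : finFieldType) n (f : factor F n) : Prop :=
  fspan f <> SEmpty /\ vec_has_span (fspan f) (fvec f) /\
  (forall a, is_point_span a (fspan f) -> exists i, fvec f i != 0).

(* V_i is a subspace of an ambient space F^m (every finite-dimensional space
   is, up to linear isomorphism), E_i a subspace of V_i x F x V_{i+1}. *)
Record ltrellis (F : finFieldType) (n : nat) := LTrellis {
  ldim : nat;
  lV : 'I_n -> {vspace 'rV[F]_ldim};
  lE : forall i : 'I_n, {vspace ('rV[F]_ldim * F^o * 'rV[F]_ldim)%type};
  lE_sub : forall (i : 'I_n) v (a : F) w, (v, a, w) \in lE i ->
      (v \in lV i) /\ (w \in lV (ordS i)) }.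
Arguments ldim {F n} l.
Arguments lV {F n} l i.
Arguments lE {F n} l i.

Definition ltr (F : finFieldType) n (T : ltrellis F n) : trellis F n :=
  @Trellis F n (fun i => {v : 'rV[F]_(ldim T) | v \in lV T i})
    (fun i v a w => (val v, a : F^o, val w) \in lE T i).

Definition cyc_amb (F : finFieldType) n m :=
  ({ffun 'I_n -> 'rV[F]_m} * 'rV[F]_n)%type.

Definition is_cycle (F : finFieldType) n (T : ltrellis F n)
  (x : cyc_amb F n (ldim T)) : bool :=
  [forall i : 'I_n, (x.1 i, x.2 0 i : F^o, x.1 (ordS i)) \in lE T i].

Arguments is_cycle {F n} T x.

Definition cyc_has_span (F : finFieldType) n m (s : tspan n)
  (x : cyc_amb F n m) : bool :=
  match s with
  | SEmpty => x == 0
  | SFull => true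
  | SSeg a l => [forall i, (x.1 i != 0) ==> in_oc a l i] &&
                [forall i, (x.2 0 i != 0) ==> in_cc a l i]
  end.

Arguments cyc_has_span {F n m} s x.

Definition Sspan (F : finFieldType) n (T : ltrellis F n) (s : tspan n)
  : {vspace cyc_amb F n (ldim T)} :=
  <<[seq x <- enum {: cyc_amb F n (ldim T)} |
       is_cycle T x && cyc_has_span s x]>>%VS.

Definition Slt (F : finFieldType) n (T : ltrellis F n) (s : tspan n)
  : {vspace cyc_amb F n (ldim T)} :=
  (\sum_(s' <- all_spans n | span_lt s' s) Sspan T s')%VS.

Definition ltrim (F : finFieldType) n (T : ltrellis F n) : Prop :=
  (forall i v, v \in lV T i -> exists (a : F) w, (v, a : F^o, w) \in lE T i) /\
  (forall i w, w \in lV T (ordS i) -> exists v (a : F), (v, a : F^o, w) \in lE T i).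

Definition lreduced (F : finFieldType) n (T : ltrellis F n) : Prop :=
  forall i v (a : F) w, (v, a : F^o, w) \in lE T i ->
    exists x : cyc_amb F n (ldim T), is_cycle T x /\
      x.1 i = v /\ x.2 0 i = a /\ x.1 (ordS i) = w.

Definition is_factorization (F : finFieldType) n (T : ltrellis F n)
  (fs : seq (factor F n)) : Prop :=
  (forall f, List.In f fs -> valid_factor f) /\
  (forall a : 'I_n, (count (fun f => is_point_span a (fspan f)) fs <= 1)%N) /\
  tr_equiv (ltr T) (tprod_list fs).

Definition count_span F n (s : tspan n) (fs : seq (factor F n)) : nat :=
  count (fun f => span_eqb (fspan f) s) fs.

Arguments Sspan {F n} T s.
Arguments Slt {F n} T s.
Arguments ltrim {F n} T.
Arguments lreduced {F n} T.
Arguments is_factorization {F n} T fs.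
Arguments count_span {F n} s fs.

(* Main.v *)
Require Import Defs.
From HB Require Import structures.
From mathcomp Require Import all_boot all_order all_algebra finfield zify.
From Stdlib Require Import IndefiniteDescription.
Set Implicit Arguments. Unset Strict Implicit. Unset Printing Implicit Defensive.
Import GRing.Theory.

Set Implicit Arguments.

Section Spans.
Variable n : nat.

Definition dd (b x : 'I_n) : nat := (x + n - b) %% n.
Definition pos (a : 'I_n) k := iter k (@ordS n) a.

Lemma ddE (b x : 'I_n) : dd b x = if (b <= x)%N then (x - b)%N else (x + n - b)%N.
Proof.
rewrite /dd; have H2 := ltn_ord x; have H3 := ltn_ord b; case: (leqP b x) => H1.
  have -> : (x + n - b = (x - b) + n)%N by lia.
  by rewrite modnDr modn_small //; lia.
by rewrite modn_small //; lia.
Qed.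

Lemma dd_lt b x : (dd b x < n)%N.
Proof. by have := ltn_ord b; rewrite ltn_mod; lia. Qed.

Lemma val_pos a k : val (pos a k) = ((a + k) %% n)%N.
Proof.
elim: k => [|k IH] /=; first by rewrite addn0 modn_small.
rewrite /pos /= -/(pos a k) IH /= -addn1 modnDml; congr (_ %% _)%N; lia.
Qed.

Lemma dd_pos b a k : dd b (pos a k) = ((dd b a + k) %% n)%N.
Proof.
rewrite /dd val_pos.
have := ltn_ord b; have := ltn_ord a => ? ?.
have -> : ((a + k) %% n + n - b = (a + k) %% n + (n - b))%N by lia.
rewrite modnDml modnDml; congr (_ %% _)%N; lia.
Qed.

Lemma dd_self a : dd a a = 0%N.
Proof. by rewrite ddE leqnn subnn. Qed.

Lemma pos_dd a i : pos a (dd a i) = i.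
Proof.
apply: val_inj; rewrite val_pos ddE.
have := ltn_ord i; have := ltn_ord a => ? ?.
case: (leqP a i) => H.
  by rewrite subnKC // modn_small.
have -> : (a + (i + n - a) = i + n)%N by lia.
by rewrite modnDr modn_small.
Qed.

Lemma dd_eq0 a i : dd a i = 0%N -> i = a.
Proof. by move=> H; rewrite -(pos_dd a i) H. Qed.

Lemma ordS_pos a k : ordS (pos a k) = pos a k.+1.
Proof. by []. Qed.

Lemma dd_ordS a i : dd a (ordS i) = ((dd a i).+1 %% n)%N.
Proof. by rewrite -[ordS i]/(pos i 1) dd_pos addn1. Qed.

Definition lset (s : tspan n) (i : 'I_n) : bool :=
  match s with SEmpty => false | SFull => true | SSeg a l => in_cc a l i end.

Lemma in_ccE (a l i : 'I_n) : in_cc a l i = (dd a i <= l)%N.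
Proof. by []. Qed.
Lemma in_ocE (a l i : 'I_n) : in_oc a l i = (0 < dd a i <= l)%N.
Proof. by []. Qed.

Lemma oc_cc (a l i : 'I_n) : in_oc a l i -> in_cc a l i.
Proof. by rewrite in_ocE in_ccE => /andP[]. Qed.

Lemma oc_ordS_cc (a l i : 'I_n) : in_oc a l (ordS i) -> in_cc a l i.
Proof.
rewrite in_ocE in_ccE dd_ordS.
have := dd_lt a i; move=> H.
case: (ltnP (dd a i).+1 n) => H2.
  rewrite modn_small //; lia.
have -> : (dd a i).+1 = n by lia.
by rewrite modnn.
Qed.

Lemma cc_full a (l : 'I_n) i : val l = n.-1 -> in_cc a l i.
Proof. by rewrite in_ccE => ->; have := dd_lt a i; lia. Qed.

Lemma oc_self (a l : 'I_n) : in_oc a l a = false.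
Proof. by rewrite in_ocE dd_self. Qed.

Lemma cc_self (a l : 'I_n) : in_cc a l a.
Proof. by rewrite in_ccE dd_self. Qed.

Lemma cc_sub_len (a1 l1 a2 l2 : 'I_n) :
  (l2 < n.-1)%N -> (forall i, in_cc a1 l1 i -> in_cc a2 l2 i) -> (l1 <= l2)%N.
Proof.
move=> Hl Hs; rewrite leqNgt; apply/negP => Hlt.
have ht : (dd a2 a1 <= l2)%N by rewrite -in_ccE; apply: Hs; apply: cc_self.
set t := dd a2 a1 in ht.
have := Hs (pos a1 (l2.+1 - t)).
rewrite !in_ccE dd_pos dd_self !add0n dd_pos -/t.
have := ltn_ord l1; have := ltn_ord l2 => ? ?.
rewrite (@modn_small (l2.+1 - t)) ?(@modn_small (t + (l2.+1 - t))); lia.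
Qed.

Lemma cc_sub_oc (a1 l1 a2 l2 : 'I_n) :
  (l2 < n.-1)%N -> (forall i, in_cc a1 l1 i -> in_cc a2 l2 i) ->
  (forall i, in_oc a1 l1 i -> in_oc a2 l2 i).
Proof.
move=> Hl Hs i Hi; have Hc := Hs _ (oc_cc Hi).
rewrite in_ocE andbC -in_ccE Hc /= lt0n; apply/eqP => /dd_eq0 Ei.
subst i; move: Hi; rewrite in_ocE => /andP[Ht Htl].
have := Hs (pos a2 n.-1).
rewrite !in_ccE !dd_pos !dd_self add0n.
rewrite (@modn_small n.-1); last lia.
have := dd_lt a1 a2 => ?.
have -> : (dd a1 a2 + n.-1 = (dd a1 a2).-1 + n)%N by lia.
rewrite modnDr modn_small; last lia.
move=> H; have := H ltac:(lia); lia.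
Qed.

Lemma span_leP (n_gt0 : (0 < n)%N) (s1 s2 : tspan n) :
  span_le s1 s2 <-> (forall i, active s1 i -> active s2 i) /\
                    (forall i, lset s1 i -> lset s2 i).
Proof.
case: s1 => [|| a1 l1]; case: s2 => [|| a2 l2] //=.
- split=> [//|[_ H]]; exact: (H (Ordinal n_gt0)).
- split=> [//|[H _]]; have := H a2; rewrite oc_self; by apply.
- split=> [//|[_ H]]; exact: (H a1 (cc_self a1 l1)).
- case: (eqVneq (val l2) n.-1) => Hl2.
  + rewrite Hl2 ltnn andbF /=.
    split.
      move=> /forallP H; split=> [i|i _]; first by move/implyP: (H i).
      by apply: cc_full.
    by move=> [H _]; apply/forallP=> i; apply/implyP; apply: H.
  + have Hl : (l2 < n.-1)%N.
      have := ltn_ord l2; move/eqP: Hl2; change (\val l2) with (nat_of_ord l2); lia.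
    rewrite Hl andbT /= orbF.
    split.
      move=> /andP[_ /forallP H].
      have H' : forall i, in_cc a1 l1 i -> in_cc a2 l2 i.
        by move=> i; move/implyP: (H i).
      by split=> //; apply: cc_sub_oc.
    move=> [_ H]; rewrite (cc_sub_len Hl H) /=.
    by apply/forallP=> i; apply/implyP; apply: H.
Qed.

Lemma span_le_refl (n_gt0 : (0 < n)%N) (s : tspan n) : span_le s s.
Proof. by apply/(span_leP n_gt0). Qed.

Lemma span_le_trans (n_gt0 : (0 < n)%N) (s1 s2 s3 : tspan n) : span_le s1 s2 -> span_le s2 s3 -> span_le s1 s3.
Proof.
move=> /(span_leP n_gt0)[H1 H2] /(span_leP n_gt0)[H3 H4]; apply/(span_leP n_gt0); split; auto.
Qed.

Lemma span_eqbP (s1 s2 : tspan n) : reflect (s1 = s2) (span_eqb s1 s2).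
Proof.
apply: (iffP idP).
  by case: s1; case: s2 => //= a l a' l' /andP[/eqP-> /eqP->].
by move=> ->; case: s2 => //= a l; rewrite !eqxx.
Qed.

Lemma span_le_anti (n_gt0 : (0 < n)%N) (s1 s2 : tspan n) : span_le s1 s2 -> span_le s2 s1 -> s1 = s2.
Proof.
move=> /(span_leP n_gt0)[H1 H2] /(span_leP n_gt0)[H3 H4].
case: s1 H1 H2 H3 H4 => [|| a1 l1]; case: s2 => [|| a2 l2] //= H1 H2 H3 H4.
- by have := H3 (Ordinal n_gt0) isT.
- by have := H4 a2 (cc_self a2 l2).
- by have := H1 (Ordinal n_gt0) isT.
- by have := H1 a2 isT; rewrite oc_self.
- by have := H2 a1 (cc_self a1 l1).
- by have := H3 a1 isT; rewrite oc_self.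
- have Ha : a1 = a2.
    have := H2 a1 (cc_self a1 l1); rewrite in_ccE => Hc.
    have Ho : in_oc a2 l2 a1 = false.
      by apply/negP => /H3; rewrite oc_self.
    move: Ho; rewrite in_ocE Hc andbT lt0n => /negbFE/eqP/dd_eq0; done.
  subst a2; congr SSeg; apply/val_inj/eqP; rewrite eqn_leq.
  have P1 := H2 (pos a1 l1); have P2 := H4 (pos a1 l2).
  move: P1 P2; rewrite !in_ccE !dd_pos dd_self !add0n !modn_small //.
  by move=> P1 P2; rewrite P1 // P2.
Qed.

End Spans.

Set Implicit Arguments.
Local Open Scope ring_scope.

Section Prod.
Variable F : finFieldType.
Variable n : nat.
Hypothesis n_gt0 : (0 < n)%N.

Definition uu (s : tspan n) (i : 'I_n) : F := if active s i then 1 else 0.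

Lemma evtx_proof (s : tspan n) (c : F) i : active s i || (c * uu s i == 0).
Proof. by rewrite /uu; case: (active s i); rewrite ?mulr0 ?eqxx. Qed.

Definition evtx (al : 'I_n -> F) (s : tspan n) (c : F) (i : 'I_n)
  : vtx (elem_trellis al s) i :=
  exist _ (c * uu s i) (evtx_proof s c i).

Fixpoint pv (fs : seq (factor F n)) (c : nat -> F) (i : 'I_n)
  : vtx (tprod_list fs) i :=
  match fs return vtx (tprod_list fs) i with
  | [::] => tt
  | f :: fs' => (evtx (fvec f) (fspan f) (c 0%N) i, pv fs' (fun k => c k.+1) i)
  end.

Fixpoint plab (fs : seq (factor F n)) (c : nat -> F) (i : 'I_n) : F :=
  match fs with
  | [::] => 0
  | f :: fs' => c 0%N * fvec f i + plab fs' (fun k => c k.+1) i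
  end.

Definition f0 : factor F n := Factor (fun _ => 0) SEmpty.

Lemma plabE fs c i : plab fs c i = \sum_(j < size fs) c j * fvec (nth f0 fs j) i.
Proof.
elim: fs c => [|f fs IH] c /=; first by rewrite big_ord0.
by rewrite big_ord_recl IH.
Qed.

Lemma pcyc fs c i : edge (tprod_list fs) i (pv fs c i) (plab fs c i) (pv fs c (ordS i)).
Proof.
elim: fs c => [|f fs IH] c /=; first by [].
exists (c 0%N * fvec f i), (plab fs (fun k => c k.+1) i); split=> //; split; last exact: IH.
by exists (c 0%N); rewrite /uu.
Qed.

Lemma pv_eq fs c c' i : pv fs c i = pv fs c' i <->
  (forall j, (j < size fs)%N -> active (fspan (nth f0 fs j)) i -> c j = c' j).
Proof.
elim: fs c c' => [|f fs IH] c c' /=; first by split=> // _ [].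
split.
  move=> E [|j] /= Hj Ha.
    have := congr1 (fun p => val p.1) E; rewrite /= /uu Ha !mulr1; done.
  by have := congr1 snd E => /= /IH; apply.
move=> H; congr pair.
  apply: val_inj => /=; rewrite /uu; case Ha: (active _ i); last by rewrite !mulr0.
  by rewrite (H 0%N).
by apply/IH => j Hj Ha; apply: (H j.+1).
Qed.

Lemma chain (g : 'I_n -> F) a L :
  (forall k, (k < L)%N -> g (pos a k) = g (pos a k.+1)) ->
  forall k, (k <= L)%N -> g (pos a k) = g a.
Proof.
move=> H; elim=> [|k IH] Hk; first by [].
by rewrite -H // IH // ltnW.
Qed.

Lemma elem_cyc (al : 'I_n -> F) (s : tspan n)
  (v : forall i, vtx (elem_trellis al s) i) (a : 'I_n -> F) :
  vec_has_span s al ->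
  (forall i, edge (elem_trellis al s) i (v i) (a i) (v (ordS i))) ->
  exists c0, forall i, v i = evtx al s c0 i /\ a i = c0 * al i.
Proof.
move=> Hsp He.
pose C i := proj1_sig (constructive_indefinite_description _ (He i)).
have HC i : sval (v i) = C i * uu s i /\ a i = C i * al i /\
            sval (v (ordS i)) = C i * uu s (ordS i).
  exact: (proj2_sig (constructive_indefinite_description _ (He i))).
have link i : active s (ordS i) -> C i = C (ordS i).
  move=> Ha; have [_ [_ E1]] := HC i; have [E2 _] := HC (ordS i).
  by move: E1; rewrite E2 /uu Ha !mulr1.
move: s v He Hsp C HC link; case=> [|| b l] v He Hsp C HC link.
- exists 0 => i; have [E1 [E2 _]] := HC i; split.
    by apply: val_inj; rewrite /= E1 /uu /= !mulr0.
  by rewrite E2 Hsp !mulr0.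
- have Hc i : C i = C (Ordinal n_gt0).
    rewrite -(pos_dd (Ordinal n_gt0) i).
    apply: (@chain C _ n.-1) => [k Hk|]; first exact: link.
    by have := dd_lt (Ordinal n_gt0) i; lia.
  exists (C (Ordinal n_gt0)) => i; have [E1 [E2 _]] := HC i; split.
    by apply: val_inj; rewrite /= E1 Hc.
  by rewrite E2 Hc.
- have Hc i : in_cc b l i -> C i = C b.
    rewrite in_ccE => Hi; rewrite -(pos_dd b i).
    apply: (@chain C _ l) => // k Hk; apply: link.
    change (in_oc b l (pos b k.+1)); rewrite in_ocE dd_pos dd_self add0n modn_small //.
    by have := ltn_ord l; lia.
  exists (C b) => i; have [E1 [E2 _]] := HC i; split.
    apply: val_inj; rewrite /= E1 /uu /=.
    by case Ha: (in_oc b l i); rewrite ?mulr0 // Hc // oc_cc.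
  rewrite E2; case: (eqVneq (al i) 0) => [->|Hn]; first by rewrite !mulr0.
  by rewrite Hc // Hsp.
Qed.

Lemma choice2 (I : Type) (P : I -> F -> F -> Prop) :
  (forall i, exists a b, P i a b) -> exists A B, forall i, P i (A i) (B i).
Proof.
move=> H.
pose A i := proj1_sig (constructive_indefinite_description _ (H i)).
have HA i : exists b, P i (A i) b := proj2_sig (constructive_indefinite_description _ (H i)).
pose B i := proj1_sig (constructive_indefinite_description _ (HA i)).
exists A, B => i; exact: (proj2_sig (constructive_indefinite_description _ (HA i))).
Qed.

Lemma pcyc_all fs (vs : forall i, vtx (tprod_list fs) i) (be : 'I_n -> F) :
  (forall j, (j < size fs)%N -> vec_has_span (fspan (nth f0 fs j)) (fvec (nth f0 fs j))) ->
  (forall i, edge (tprod_list fs) i (vs i) (be i) (vs (ordS i))) ->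
  exists c : nat -> F, (forall i, vs i = pv fs c i) /\ (forall i, be i = plab fs c i).
Proof.
elim: fs vs be => [|f fs IH] vs be Hv He /=.
  by exists (fun _ => 0); split=> i; [case: (vs i) | exact: He].
have [A [B HB]] := @choice2 _ (fun i a1 a2 => be i = a1 + a2 /\
     edge (elem_trellis (fvec f) (fspan f)) i (vs i).1 a1 (vs (ordS i)).1 /\
     edge (tprod_list fs) i (vs i).2 a2 (vs (ordS i)).2) He.
have [c0 Hc0] := @elem_cyc (fvec f) (fspan f) (fun i => (vs i).1) A (Hv 0%N isT) (fun i => (HB i).2.1).
have [c' [Hc1 Hc2]] := IH (fun i => (vs i).2) B (fun j Hj => Hv j.+1 Hj) (fun i => (HB i).2.2).
exists (fun k => if k is k'.+1 then c' k' else c0); split=> i.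
  by rewrite -(Hc0 i).1 -Hc1; case: (vs i).
by rewrite (HB i).1 (Hc0 i).2 Hc2.
Qed.

End Prod.

Local Close Scope ring_scope.

Set Implicit Arguments.
Local Open Scope ring_scope.

Section Key.
Variable F : finFieldType.
Variable n : nat.
Hypothesis n_gt0 : (0 < n)%N.

Lemma active_lset (s : tspan n) i : active s i -> lset s i.
Proof. by case: s => //= a l; apply: oc_cc. Qed.

Lemma nonpoint_lset (s0 s : tspan n) i0 :
  active s0 i0 -> (forall i, active s0 i -> active s i) ->
  forall i, lset s0 i -> lset s i.
Proof.
move=> Hi0 Hsub i; case: s0 Hi0 Hsub => //= [_|a l Hi0] Hsub.
  case: s Hsub => //= [H|a l H _]; first by have := H i isT.
  by have := H a isT; rewrite oc_self.
move=> Hc; case Ho: (in_oc a l i); first by apply: active_lset; apply: Hsub.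
have Ei : i = a.
  by move: Hc Ho; rewrite in_ccE in_ocE => -> /negbT; rewrite andbT lt0n negbK => /eqP/dd_eq0.
subst i.
have Hl : (0 < l)%N by move: Hi0; rewrite in_ocE; lia.
have HS : in_oc a l (ordS a).
  rewrite in_ocE dd_ordS dd_self modn_small //; have := ltn_ord l; lia.
have := Hsub _ HS; case: s {Hsub} => //= a' l'.
exact: oc_ordS_cc.
Qed.

Variable N : nat.
Variable sp : 'I_N -> tspan n.
Variable al : 'I_N -> 'I_n -> F.
Hypothesis Hne : forall j, sp j <> SEmpty.
Hypothesis Hvs : forall j i, al j i != 0 -> lset (sp j) i.
Hypothesis Hpt : forall j b, is_point_span b (sp j) -> al j b != 0.
Hypothesis Huniq : forall j k b, is_point_span b (sp j) -> is_point_span b (sp k) -> j = k.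

Lemma classify j : (exists i, active (sp j) i) \/ (exists b, is_point_span b (sp j)).
Proof.
have := @Hne j; case: (sp j) => //= [_|a l _].
  by left; exists (Ordinal n_gt0).
case: (posnP l) => Hl.
  by right; exists a; rewrite eqxx.
left; exists (ordS a); rewrite in_ocE dd_ordS dd_self modn_small //.
have := ltn_ord l; lia.
Qed.

Lemma point_lset b (s : tspan n) i : is_point_span b s -> lset s i -> i = b.
Proof.
case: s => //= a l /andP[/eqP-> /eqP Hl]; change (\val l) with (nat_of_ord l) in Hl.
rewrite in_ccE Hl leqn0 => /eqP.
exact: dd_eq0.
Qed.

Lemma sum_nz (P : 'I_N -> F) : \sum_j P j != 0 -> exists j, P j != 0.
Proof.
move=> H; apply/existsP; apply: contraR H => /existsPn H.
by apply/eqP; apply: big1 => j _; apply/eqP; move: (H j); rewrite negbK.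
Qed.

Lemma key_abs (s : tspan n) (d : 'I_N -> F) :
  ((forall i, (exists j, active (sp j) i /\ d j != 0) -> active s i) /\
   (forall i, \sum_j d j * al j i != 0 -> lset s i)) <->
  (forall j, d j != 0 -> span_le (sp j) s).
Proof.
split.
  move=> [V L] j Hj; apply/(span_leP n_gt0).
  have Ha : forall i, active (sp j) i -> active s i by move=> i Hi; apply: V; exists j.
  split=> //.
  case: (classify j) => [[i0 Hi0]|[b Hb]]; first exact: nonpoint_lset Hi0 Ha.
  move=> i /(point_lset Hb) ->.
  case: (eqVneq (\sum_k d k * al k b) 0) => Hs; last exact: L.
  move: Hs; rewrite (bigD1 j) //= => /eqP; rewrite addr_eq0 => /eqP Hs.
  have : \sum_(k | k != j) d k * al k b != 0.
    by rewrite -oppr_eq0 -Hs mulf_neq0 // (@Hpt j b).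
  rewrite big_mkcond /= => /sum_nz [k].
  case: ifP => [Hkj Hk|_]; last by rewrite eqxx.
  have Hdk : d k != 0 by apply: contraNneq Hk => ->; rewrite mul0r.
  have Hak : al k b != 0 by apply: contraNneq Hk => ->; rewrite mulr0.
  have Hlk := @Hvs k b Hak.
  case: (classify k) => [[i0 Hi0]|[b' Hb']].
    by apply: (nonpoint_lset Hi0) Hlk => i1 Hi1; apply: V; exists k.
  have Eb := point_lset Hb' Hlk; subst b'.
  by have E := @Huniq j k b Hb Hb'; rewrite E eqxx in Hkj.
move=> H; split.
  move=> i [j [Ha Hd]]; have /(span_leP n_gt0) [H1 _] := H j Hd; exact: H1.
move=> i /sum_nz [j Hj].
have Hd : d j != 0 by apply: contraNneq Hj => ->; rewrite mul0r.
have Ha : al j i != 0 by apply: contraNneq Hj => ->; rewrite mulr0.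
have /(span_leP n_gt0)[_ H2] := H j Hd; apply: H2; exact: Hvs.
Qed.
End Key.

Local Close Scope ring_scope.

Set Implicit Arguments.
Local Open Scope ring_scope.

Lemma chsP (F : finFieldType) n m (s : tspan n) (x : cyc_amb F n m) :
  cyc_has_span s x <->
  (forall i, x.1 i != 0 -> active s i) /\ (forall i, x.2 0 i != 0 -> lset s i).
Proof.
case: s => //=.
- split.
    move/eqP->; split=> i; by rewrite ?ffunE ?mxE eqxx.
  case: x => x1 x2 /= [H1 H2]; apply/eqP; congr pair.
    by apply/ffunP => i; rewrite ffunE; apply/eqP/negPn/negP => /H1.
  by apply/rowP => i; rewrite mxE; apply/eqP/negPn/negP => /H2.
- move=> a l; split.
    by move=> /andP[/forallP H1 /forallP H2]; split=> i; [move/implyP: (H1 i)|move/implyP: (H2 i)].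
  by move=> [H1 H2]; apply/andP; split; apply/forallP => i; apply/implyP; [apply: H1|apply: H2].
Qed.

Lemma is_cycleB (F : finFieldType) n (T : ltrellis F n) x y :
  is_cycle T x -> is_cycle T y -> is_cycle T (x - y).
Proof.
move=> /forallP Hx /forallP Hy; apply/forallP => i.
have -> : ((x - y).1 i, (x - y).2 0 i, (x - y).1 (ordS i)) =
          (x.1 i, x.2 0 i, x.1 (ordS i)) - (y.1 i, y.2 0 i, y.1 (ordS i)).
  by rewrite /= !ffunE !mxE.
exact: memvB.
Qed.

Lemma is_cycleD (F : finFieldType) n (T : ltrellis F n) x y :
  is_cycle T x -> is_cycle T y -> is_cycle T (x + y).
Proof.
move=> /forallP Hx /forallP Hy; apply/forallP => i.
have -> : ((x + y).1 i, (x + y).2 0 i, (x + y).1 (ordS i)) =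
          (x.1 i, x.2 0 i, x.1 (ordS i)) + (y.1 i, y.2 0 i, y.1 (ordS i)).
  by rewrite /= !ffunE !mxE.
exact: memvD.
Qed.

HB.instance Definition _ (n : nat) := hasDecEq.Build (tspan n) (@span_eqbP n).

Lemma mem_all_spans n (s0 : tspan n) : s0 \in all_spans n.
Proof.
case: s0 => [||a l]; rewrite /all_spans !inE ?eqxx ?orbT //=.
apply/allpairsPdep; exists a, l; by rewrite !mem_enum.
Qed.

Lemma le_lt_trans n (n_gt0 : (0 < n)%N) (a b s : tspan n) :
  span_le a b -> span_lt b s -> span_lt a s.
Proof.
rewrite /span_lt => Hab /andP[Hne Hbs]; apply/andP; split; last exact: span_le_trans Hab Hbs.
apply/negP => /span_eqbP E; subst a.
by have E := span_le_anti n_gt0 Hbs Hab; subst b; move: Hne; rewrite (introT (span_eqbP _ _) erefl).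
Qed.

Lemma chs_add (F : finFieldType) n m (s : tspan n) (x y : cyc_amb F n m) :
  cyc_has_span s x -> cyc_has_span s y -> cyc_has_span s (x + y).
Proof.
move=> /chsP[Hx1 Hx2] /chsP[Hy1 Hy2]; apply/chsP; split=> i /=; rewrite ?ffunE ?mxE => Hi.
  case: (eqVneq (x.1 i) 0) => H0; last exact: Hx1.
  by apply: Hy1; move: Hi; rewrite H0 add0r.
case: (eqVneq (x.2 0 i) 0) => H0; last exact: Hx2.
by apply: Hy2; move: Hi; rewrite H0 add0r.
Qed.

Lemma chs_scale (F : finFieldType) n m (s : tspan n) (k : F) (x : cyc_amb F n m) :
  cyc_has_span s x -> cyc_has_span s (k *: x).
Proof.
move=> /chsP[Hx1 Hx2]; apply/chsP; split=> i /=; rewrite ?ffunE ?mxE => Hi.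
  case: (eqVneq (x.1 i) 0) => H0; last exact: Hx1.
  by move: Hi; rewrite H0 scaler0 eqxx.
case: (eqVneq (x.2 0 i) 0) => H0; last exact: Hx2.
by move: Hi; rewrite H0 mulr0 eqxx.
Qed.

Lemma chs0 (F : finFieldType) n m (s : tspan n) : cyc_has_span s (0 : cyc_amb F n m).
Proof. by apply/chsP; split=> i /=; rewrite ?ffunE ?mxE eqxx. Qed.

Lemma is_cycleZ (F : finFieldType) n (T : ltrellis F n) (k : F) x :
  is_cycle T x -> is_cycle T (k *: x).
Proof.
move=> /forallP Hx; apply/forallP => i.
have -> : ((k *: x).1 i, (k *: x).2 0 i, (k *: x).1 (ordS i)) =
          k *: ((x.1 i, x.2 0 i : F^o, x.1 (ordS i)) : ('rV[F]_(ldim T) * F^o * 'rV[F]_(ldim T))%type).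
  by rewrite /= !ffunE !mxE.
exact: memvZ.
Qed.

Lemma is_cycle0 (F : finFieldType) n (T : ltrellis F n) : is_cycle T 0.
Proof.
apply/forallP => i.
have -> : ((0 : cyc_amb F n (ldim T)).1 i, (0 : cyc_amb F n (ldim T)).2 0 i,
           (0 : cyc_amb F n (ldim T)).1 (ordS i)) = 0.
  by rewrite /= !ffunE !mxE.
exact: mem0v.
Qed.

Lemma Sspan_mem (F : finFieldType) n (T : ltrellis F n) s x :
  (x \in Sspan T s) = is_cycle T x && cyc_has_span s x.
Proof.
apply/idP/idP; last first.
  by move=> Hx; apply: memv_span; rewrite mem_filter /= Hx mem_enum memvf.
rewrite /Sspan span_def big_seq.
apply: (big_ind (fun U : {vspace _} => forall x, x \in U -> is_cycle T x && cyc_has_span s x)) x.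
- by move=> y; rewrite memv0 => /eqP->; rewrite is_cycle0 chs0.
- move=> U V HU HV y /memv_addP[u Hu [v Hv ->]].
  move: (HU u Hu) (HV v Hv) => /andP[H1 H2] /andP[H3 H4].
  by rewrite is_cycleD // chs_add.
- move=> u; rewrite mem_filter => /andP[/andP[H1 H2] _] y /vlineP[k ->].
  by rewrite is_cycleZ // chs_scale.
Qed.

Unset Implicit Arguments.
Section Main.
Variable F : finFieldType.
Variable n : nat.
Hypothesis n_gt0 : (0 < n)%N.
Variable T : ltrellis F n.
Variable fs : seq (factor F n).
Variable f : forall i, vtx (ltr T) i -> vtx (tprod_list fs) i.
Variable g : forall i, vtx (tprod_list fs) i -> vtx (ltr T) i.
Hypothesis Hgf : forall i, cancel (g i) (f i).
Hypothesis Hfg : forall i, cancel (f i) (g i).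
Hypothesis Hedge : forall i v a w,
  edge (ltr T) i v a w <-> edge (tprod_list fs) i (f i v) a (f (ordS i) w).
Hypothesis Hvsp : forall j, (j < size fs)%N ->
  vec_has_span (fspan (nth (f0 F n) fs j)) (fvec (nth (f0 F n) fs j)).

Local Notation N := (size fs).
Definition sp (j : 'I_N) := fspan (nth (f0 F n) fs j).
Definition al (j : 'I_N) := fvec (nth (f0 F n) fs j).

Definition gvec (c : nat -> F) : cyc_amb F n (ldim T) :=
  ([ffun i => sval (g i (pv fs c i))], \row_(i < n) plab fs c i).

Definition ext (c : {ffun 'I_N -> F}) (k : nat) : F :=
  if insub k is Some j then c j else 0.

Lemma ext_ord c (j : 'I_N) : ext c j = c j.
Proof. by rewrite /ext valK. Qed.

Definition Phi c := gvec (ext c) - gvec (fun _ => 0).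

Lemma gvec_ext (c c' : nat -> F) :
  (forall j : 'I_N, c j = c' j) -> gvec c = gvec c'.
Proof.
move=> H; rewrite /gvec; congr pair.
  apply/ffunP => i; rewrite !ffunE; congr (sval (g i _)).
  by apply/pv_eq => j Hj _; apply: (H (Ordinal Hj)).
by apply/rowP => i; rewrite !mxE !plabE; apply: eq_bigr => j _; rewrite H.
Qed.


Lemma gvec_cycle c : is_cycle T (gvec c).
Proof.
apply/forallP => i; rewrite /gvec /= !ffunE mxE.
have H : edge (ltr T) i (g i (pv fs c i)) (plab fs c i) (g (ordS i) (pv fs c (ordS i))).
  by apply/Hedge; rewrite !Hgf; exact: pcyc.
exact: H.
Qed.

Lemma Phi0 : Phi 0 = 0.
Proof.
by rewrite /Phi (@gvec_ext (ext 0) (fun _ => 0)) ?subrr // => j; rewrite ext_ord ffunE.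
Qed.

Lemma Phi_cycle c : is_cycle T (Phi c).
Proof. by apply: is_cycleB; apply: gvec_cycle. Qed.

Lemma Phi_surj x : is_cycle T x -> exists c, x = Phi c.
Proof.
move=> Hx.
set y := x + gvec (fun _ => 0).
have Hy : is_cycle T y by apply: is_cycleD => //; apply: gvec_cycle.
have Hyi i := forallP Hy i.
pose vt i : vtx (ltr T) i := exist _ (y.1 i) (lE_sub (Hyi i)).1.
have He i : edge (tprod_list fs) i (f i (vt i)) (y.2 0 i) (f (ordS i) (vt (ordS i))).
  by apply/Hedge; exact: (Hyi i).
have [c [Hc1 Hc2]] := @pcyc_all F n n_gt0 fs (fun i => f i (vt i)) (fun i => y.2 0 i) Hvsp He.
exists [ffun j : 'I_N => c j].
have E : gvec (ext [ffun j : 'I_N => c j]) = y.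
  rewrite (@gvec_ext _ c); last by move=> j; rewrite ext_ord ffunE.
  rewrite [RHS]surjective_pairing /gvec; congr pair.
    by apply/ffunP => i; rewrite ffunE -Hc1 Hfg.
  by apply/rowP => i; rewrite mxE -Hc2.
by rewrite /Phi E /y addrK.
Qed.

Lemma PhiB c c' : Phi c - Phi c' = gvec (ext c) - gvec (ext c').
Proof. by rewrite /Phi opprB addrA subrK. Qed.

Lemma Phi_vtx c c' i :
  ((Phi c - Phi c').1 i != 0) <-> exists j : 'I_N, active (sp j) i /\ c j - c' j != 0.
Proof.
rewrite PhiB /= !ffunE subr_eq0.
have -> : (sval (g i (pv fs (ext c) i)) == sval (g i (pv fs (ext c') i))) =
          (pv fs (ext c) i == pv fs (ext c') i).
  by rewrite (inj_eq val_inj) (inj_eq (can_inj (Hgf i))).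
split.
  move=> H; have /existsP [j /andP [Ha Hd]] :
      [exists j : 'I_N, active (sp j) i && (c j - c' j != 0)].
    apply: contraR H => /existsPn H; apply/eqP/pv_eq => j Hj Ha.
    have := H (Ordinal Hj); rewrite /sp /= Ha /= subr_eq0 negbK => /eqP E.
    by rewrite -[j]/(nat_of_ord (Ordinal Hj)) !ext_ord.
  by exists j.
move=> [j [Ha Hd]]; apply/negP => /eqP /pv_eq /(_ j (ltn_ord j) Ha).
by rewrite !ext_ord => E; move: Hd; rewrite E subrr eqxx.
Qed.

Lemma Phi_lab c c' i : (Phi c - Phi c').2 0 i = \sum_j (c j - c' j) * al j i.
Proof.
rewrite PhiB /= !mxE !plabE -sumrB; apply: eq_bigr => j _.
by rewrite !ext_ord mulrBl.
Qed.

Hypothesis Hne : forall j, sp j <> SEmpty.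
Hypothesis Hvs : forall j i, al j i != 0 -> lset (sp j) i.
Hypothesis Hpt : forall j b, is_point_span b (sp j) -> al j b != 0.
Hypothesis Huniq : forall j k b, is_point_span b (sp j) -> is_point_span b (sp k) -> j = k.

Lemma Phi_span s c c' :
  cyc_has_span s (Phi c - Phi c') <-> (forall j, c j != c' j -> span_le (sp j) s).
Proof.
eapply iff_trans; first exact: chsP.
eapply iff_trans; last first.
  eapply iff_trans; first exact: (key_abs n_gt0 Hne Hvs Hpt Huniq s (fun j => c j - c' j)).
  by split=> H j Hj; apply: H; move: Hj; rewrite subr_eq0.
split=> [[H1 H2]|[H1 H2]]; split=> i.
- by move=> Hj; apply: H1; apply/Phi_vtx.
- by rewrite -Phi_lab; exact: H2.
- by move/Phi_vtx; exact: H1.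
- by rewrite Phi_lab; exact: H2.
Qed.

Lemma span_le_empty (s : tspan n) : s <> SEmpty -> span_le s SEmpty = false.
Proof. by case: s. Qed.

Lemma Phi_inj : injective Phi.
Proof.
move=> c c' E; apply/ffunP => j; apply/eqP/negPn/negP => Hj.
have : cyc_has_span SEmpty (Phi c - Phi c') by rewrite E subrr /=.
by move/Phi_span/(_ j Hj); rewrite span_le_empty.
Qed.

Lemma Phi_span0 s c : cyc_has_span s (Phi c) <-> (forall j, c j != 0 -> span_le (sp j) s).
Proof.
rewrite -[Phi c]subr0 -Phi0; eapply iff_trans; first exact: Phi_span.
by split=> H j Hj; apply: H; move: Hj; rewrite ffunE.
Qed.

Definition Aset (P : 'I_N -> bool) :=
  [set c : {ffun 'I_N -> F} | [forall j, (c j != 0) ==> P j]].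

Lemma card_Aset P : #|Aset P| = (#|F| ^ #|[set j | P j]|)%N.
Proof.
have -> : #|F| = #|(predT : pred F)| by apply: eq_card.
rewrite -(card_pffun_on 0 [set j | P j] (predT : pred F)).
apply: eq_card => c; rewrite inE; apply/forallP/pffun_onP.
  move=> H; split=> //; apply/subsetP => j; rewrite !inE => Hj.
  by move/implyP: (H j); apply.
move=> [/subsetP H _] j; apply/implyP => Hj.
by have := H j; rewrite !inE; apply.
Qed.

Lemma dim_of (V : {vspace cyc_amb F n (ldim T)}) P :
  (forall x, (x \in V) = (x \in Phi @: Aset P)) -> \dim V = #|[set j | P j]|.
Proof.
move=> H; have := card_vspace V.
rewrite (eq_card H) card_imset; last exact: Phi_inj.
rewrite card_Aset => /eqP; rewrite eqn_exp2l ?card_finNzRing_gt1 //.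
by move/eqP.
Qed.

Lemma Sspan_img s x :
  (x \in Sspan T s) = (x \in Phi @: Aset (fun j => span_le (sp j) s)).
Proof.
rewrite Sspan_mem; apply/idP/imsetP.
  move=> /andP[Hc Hs]; have [c Ec] := Phi_surj x Hc; exists c => //.
  rewrite inE; apply/forallP => j; apply/implyP; apply: (proj1 (Phi_span0 _ _)).
  by rewrite -Ec.
move=> [c]; rewrite inE => /forallP H ->; rewrite Phi_cycle /=.
by apply/Phi_span0 => j Hj; move/implyP: (H j); apply.
Qed.

Lemma Sspan_le_Slt s0 s : span_lt s0 s -> (Sspan T s0 <= Slt T s)%VS.
Proof.
by move=> H; rewrite /Slt (big_rem s0) ?mem_all_spans //= H; apply: addvSl.
Qed.

Lemma Phi_in_Slt s k (c : {ffun 'I_N -> F}) : #|[set j | c j != 0]| = k ->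
  c \in Aset (fun j => span_lt (sp j) s) -> Phi c \in Slt T s.
Proof.
elim: k c => [|k IH] c Hk Hc.
  have -> : c = 0.
    apply/ffunP => j; rewrite ffunE; apply/eqP/negPn/negP => Hj.
    by have := cards0_eq Hk => /setP/(_ j); rewrite !inE Hj.
  by rewrite Phi0 mem0v.
have [j0 Hj0] : exists j0, j0 \in [set j | c j != 0].
  by apply/set0Pn; rewrite -card_gt0 Hk.
pose c' := [ffun j => if j == j0 then 0 else c j].
have Hc'k : #|[set j | c' j != 0]| = k.
  have : [set j | c' j != 0] = [set j | c j != 0] :\ j0.
    apply/setP => j; rewrite !inE ffunE; case: (eqVneq j j0) => //=; by rewrite eqxx.
  move=> ->; move: Hk; rewrite (cardsD1 j0) Hj0 /=; lia.
have Hc' : c' \in Aset (fun j => span_lt (sp j) s).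
  move: Hc; rewrite !inE => /forallP H; apply/forallP => j; rewrite ffunE.
  by case: (j == j0); rewrite ?eqxx //; apply: H.
have := IH c' Hc'k Hc' => H1.
rewrite -[Phi c](subrK (Phi c')) addrC memvD //.
apply: (subvP (Sspan_le_Slt (sp j0) s _)).
  by move: Hc; rewrite inE => /forallP/(_ j0)/implyP; apply; move: Hj0; rewrite inE.
rewrite Sspan_mem is_cycleB ?Phi_cycle //=.
apply/Phi_span => j; rewrite ffunE; case: (eqVneq j j0) => [->|]; first by rewrite span_le_refl.
by rewrite eqxx.
Qed.

Lemma Slt_img s x :
  (x \in Slt T s) = (x \in Phi @: Aset (fun j => span_lt (sp j) s)).
Proof.
apply/idP/idP; last first.
  by move=> /imsetP[c Hc ->]; exact: (Phi_in_Slt s _ c erefl Hc).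
set A := Aset _.
suff K : forall c, c \in A -> forall u, u \in Slt T s -> Phi c + u \in Phi @: A.
  move=> Hx; have := K 0 _ x Hx; rewrite Phi0 add0r; apply.
  by rewrite inE; apply/forallP => j; rewrite ffunE eqxx.
rewrite /Slt.
apply: (big_ind (fun U : {vspace _} => forall c, c \in A -> forall u, u \in U -> Phi c + u \in Phi @: A)).
- by move=> c Hc u; rewrite memv0 => /eqP->; rewrite addr0 imset_f.
- move=> U V HU HV c Hc u /memv_addP[u1 Hu1 [u2 Hu2 ->]].
  have /imsetP[c1 Hc1 E1] := HU c Hc u1 Hu1.
  by rewrite addrA E1; apply: HV.
- move=> s' Hs' c Hc u; rewrite Sspan_mem => /andP[Hu Hsu].
  have [c'' E] := Phi_surj _ (is_cycleD (Phi_cycle c) Hu).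
  rewrite E; apply: imset_f.
  have Hd : cyc_has_span s' (Phi c'' - Phi c) by rewrite -E addrC addKr.
  move/Phi_span: Hd => Hd.
  move: Hc; rewrite !inE => /forallP H; apply/forallP => j; apply/implyP => Hj.
  case: (eqVneq (c j) 0) => Hcj; last by move/implyP: (H j); apply.
  apply: (le_lt_trans n_gt0 _ Hs'); apply: Hd; by rewrite Hcj.
Qed.

End Main.

Local Close Scope ring_scope.

Set Implicit Arguments.

Lemma In_nth (T : Type) (x0 : T) s j : (j < size s)%N -> List.In (nth x0 s j) s.
Proof.
elim: s j => [|x s IH] [|j] //= Hj; first by left.
by right; apply: IH.
Qed.

Lemma count_card (T : Type) (x0 : T) (p : pred T) s :
  count p s = #|[set j : 'I_(size s) | p (nth x0 s j)]|.
Proof.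
rewrite -sum1_count (big_nth x0) big_mkord -sum1_card.
by apply: eq_bigl => j; rewrite inE.
Qed.

Lemma count_formula (F : finFieldType) n (T : ltrellis F n) (fs : seq (factor F n)) :
  (0 < n)%N -> is_factorization T fs ->
  forall s : tspan n, count_span s fs = (\dim (Sspan T s) - \dim (Slt T s))%N.
Proof.
move=> n_gt0 [Hval [Hcnt [f [Hbij Hedge]]]] s.
have Hb i : exists g, cancel (f i) g /\ cancel g (f i).
  by case: (Hbij i) => g ? ?; exists g.
pose g i := proj1_sig (constructive_indefinite_description _ (Hb i)).
have Hg i : cancel (f i) (g i) /\ cancel (g i) (f i).
  exact: (proj2_sig (constructive_indefinite_description _ (Hb i))).
have Hfg i := (Hg i).1; have Hgf i := (Hg i).2.
have Hv j : (j < size fs)%N -> valid_factor (nth (f0 F n) fs j).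
  by move=> Hj; apply: Hval; apply: In_nth.
have Hvsp j Hj := (Hv j Hj).2.1.
have Hne (j : 'I_(size fs)) : sp F n fs j <> SEmpty := (Hv j (ltn_ord j)).1.
have Hvs (j : 'I_(size fs)) i : al F n fs j i != 0%R -> lset (sp F n fs j) i.
  move: (Hvsp j (ltn_ord j)); rewrite /al /sp.
  case: (fspan _) => //= [H|a l H]; last by apply: H.
  by rewrite H eqxx.
have Hpt (j : 'I_(size fs)) b : is_point_span b (sp F n fs j) -> al F n fs j b != 0%R.
  move=> Hb'; have [i Hi] := (Hv j (ltn_ord j)).2.2 b Hb'.
  by rewrite -(point_lset Hb' (Hvs j i Hi)).
have Huniq (j k : 'I_(size fs)) b :
    is_point_span b (sp F n fs j) -> is_point_span b (sp F n fs k) -> j = k.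
  move=> Hj Hk; apply/eqP; apply/negP => /negP Hjk.
  have := Hcnt b; rewrite (count_card (f0 F n)).
  have : #|[set j; k]| <= #|[set j0 : 'I_(size fs) | is_point_span b (fspan (nth (f0 F n) fs j0))]|.
    by apply: subset_leq_card; apply/subsetP => x; rewrite !inE => /orP[] /eqP->.
  rewrite cards2 Hjk; lia.
have Dle := @dim_of F n n_gt0 T fs f g Hgf Hne Hvs Hpt Huniq _ _
  (@Sspan_img F n n_gt0 T fs f g Hgf Hfg Hedge Hvsp Hne Hvs Hpt Huniq s).
have Dlt := @dim_of F n n_gt0 T fs f g Hgf Hne Hvs Hpt Huniq _ _
  (@Slt_img F n n_gt0 T fs f g Hgf Hfg Hedge Hvsp Hne Hvs Hpt Huniq s).
rewrite Dle Dlt /count_span (count_card (f0 F n)).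
rewrite -(cardsID [set j | span_lt (sp F n fs j) s] [set j | span_le (sp F n fs j) s]).
have -> : [set j | span_le (sp F n fs j) s] :&: [set j | span_lt (sp F n fs j) s] =
          [set j | span_lt (sp F n fs j) s].
  by apply/setP => j; rewrite !inE /span_lt; case: (span_le _ s); rewrite ?andbT ?andbF.
have -> : [set j | span_le (sp F n fs j) s] :\: [set j | span_lt (sp F n fs j) s] =
          [set j : 'I_(size fs) | span_eqb (fspan (nth (f0 F n) fs j)) s].
  apply/setP => j; rewrite !inE /span_lt /sp.
  case: (span_eqbP (fspan (nth (f0 F n) fs j)) s) => [->|_] /=.
    by rewrite span_le_refl.
  by case: (span_le _ s).
by rewrite addKn.
Qed.

Theorem mainTheorem8 (F : finFieldType) (n : nat) (T : ltrellis F n) :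
  (0 < n)%N -> ltrim T -> lreduced T ->
  (forall fs1 fs2, is_factorization T fs1 -> is_factorization T fs2 ->
     forall s : tspan n, count_span s fs1 = count_span s fs2) /\
  (forall fs, is_factorization T fs ->
     forall s : tspan n,
       count_span s fs = (\dim (Sspan T s) - \dim (Slt T s))%N).
Proof.
move=> n_gt0 _ _; split.
  by move=> fs1 fs2 H1 H2 s; rewrite (count_formula n_gt0 H1) (count_formula n_gt0 H2).
by move=> fs H s; apply: count_formula.
Qed.
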